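(* Let $n$ be even, $c>0$, $|\lambda|<c$. Let $P_0^{(n)}$ be the Erdős–Rényi law on graphs on $\{1,\dots,n\}$ with independent edges of probability $p_n=c/n$, and $P_1^{(n)}$ the two-block stochastic block model with two fixed equally sized blocks of size $n/2$, independent edges with probability $p_n^{\mathrm{in}}=(c+\lambda)/n$ within blocks and $p_n^{\mathrm{out}}=(c-\lambda)/n$ between blocks, so that there are $N_n^{\mathrm{in}}=n^2/4-n/2$ within-block and $N_n^{\mathrm{out}}=n^2/4$ between-block pairs. Let \[\mathcal C_n:=\sup_{0\le t\le1}-\log\sum_A P_0^{(n)}(A)^{1-t}P_1^{(n)}(A)^t\] be the Chernoff information (the sum running over adjacency matrices $A$). Then \[\frac{\mathcal C_n}{n}\to J(\lambda):=\sup_{0\le t\le1}\frac14\Big[2c-c^{1-t}\big((c+\lambda)^t+(c-\lambda)^t\big)\Big].\] Moreover, as $\lambda\to0$, $J(\lambda)=\frac{\lambda^2}{16c}+O(\lambda^4/c^3)$; in particular $\mathcal C_n=J(\lambda)n+o(n)$ and $J(\lambda)=\frac14 I(\lambda)+O(\lambda^4/c^3)$, where $I(\lambda):=\frac14\big[(c+\lambda)\log\frac{c+\lambda}{c}+(c-\lambda)\log\frac{c-\lambda}{c}\big]$. *)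

(* Defs.v *)
From HB Require Import structures.
From mathcomp Require Import all_boot all_order all_algebra.
From mathcomp Require Import all_classical all_reals all_analysis.
Unset Printing Implicit Defensive.
Import Order.TTheory GRing.Theory Num.Theory.
Local Open Scope classical_set_scope.
Local Open Scope ring_scope.

(* Vertices are 'I_n = {0,...,n-1}.  A simple graph is identified with its
   edge set, a set of pairs (i,j) with i < j (the upper triangle of the
   adjacency matrix). *)
Definition upper_pairs (n : nat) : {set 'I_n * 'I_n} :=
  [set e : 'I_n * 'I_n | (e.1 < e.2)%N].

Definition graph_prob {R : realType} (n : nat) (q : 'I_n -> 'I_n -> R)
    (A : {set 'I_n * 'I_n}) : R :=
  \prod_(e in upper_pairs n) (if e \in A then q e.1 e.2 else 1 - q e.1 e.2).

Definition er_q {R : realType} (c : R) (n : nat) : 'I_n -> 'I_n -> R :=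
  fun _ _ => c / n%:R.

Definition same_block (n : nat) (i j : 'I_n) : bool :=
  ((i < n./2)%N == (j < n./2)%N).

Definition sbm_q {R : realType} (c lam : R) (n : nat) : 'I_n -> 'I_n -> R :=
  fun i j => if same_block n i j then (c + lam) / n%:R else (c - lam) / n%:R.

Definition P0 {R : realType} (c : R) (n : nat) (A : {set 'I_n * 'I_n}) : R :=
  graph_prob n (er_q c n) A.

Definition P1 {R : realType} (c lam : R) (n : nat) (A : {set 'I_n * 'I_n}) : R :=
  graph_prob n (sbm_q c lam n) A.

Definition chernoff_sum {R : realType} (c lam : R) (n : nat) (t : R) : R :=
  \sum_(A : {set 'I_n * 'I_n} | A \subset upper_pairs n)
     (P0 c n A `^ (1 - t)) * (P1 c lam n A `^ t).

Definition chernoff_info {R : realType} (c lam : R) (n : nat) : R :=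
  sup [set - ln (chernoff_sum c lam n t) | t in `[0, 1]].

Definition Jfun {R : realType} (c lam : R) : R :=
  sup [set (2 * c - c `^ (1 - t) * ((c + lam) `^ t + (c - lam) `^ t)) / 4
      | t in `[0, 1]].

Definition Ifun {R : realType} (c lam : R) : R :=
  ((c + lam) * ln ((c + lam) / c) + (c - lam) * ln ((c - lam) / c)) / 4.

(* Main.v *)
Require Import Defs.
From HB Require Import structures.
From mathcomp Require Import all_boot all_order all_algebra.
From mathcomp Require Import all_classical all_reals all_analysis.
From mathcomp Require Import ring lra zify.
Import Order.TTheory GRing.Theory Num.Theory numFieldNormedType.Exports.
Local Open Scope classical_set_scope.
Local Open Scope ring_scope.

Section H.
Variable R : realType.

Lemma mvt0 {f df : R -> R} {x : R} : (forall y : R, is_derive y 1 f (df y)) -> x != 0 ->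
  exists c, 0 < c * x /\ `|c| < `|x| /\ f x - f 0 = df c * x.
Proof.
move=> hd x0.
have cf : forall a b : R, {within `[a, b], continuous f}.
  move=> a b; apply/continuous_subspaceT => r.
  exact/differentiable_continuous/derivable1_diffP/(@ex_derive _ _ _ _ _ _ _ (hd r)).
case: (ltgtP x 0) x0 => // hx _.
- have [c] := @MVT R f df x 0 hx (fun y _ => hd y) (cf _ _).
  rewrite in_itv/= => /andP[xc c0] e.
  exists c; split; first by nra.
  split; first by rewrite !ltr0_norm //; lra.
  by move: e; rewrite sub0r => e; lra.
- have [c] := @MVT R f df 0 x hx (fun y _ => hd y) (cf _ _).
  rewrite in_itv/= => /andP[c0 cx] e.
  exists c; split; first by rewrite mulr_gt0.
  split; first by rewrite !gtr0_norm //; lra.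
  by move: e; rewrite subr0.
Qed.

Lemma expR_T3 (u : R) : 1 + u + 2^-1 * u ^+ 2 + 6^-1 * u ^+ 3 <= expR u.
Proof.
set g1 := fun u : R => expR u - (1 + u + 2^-1 * u ^+ 2).
have dg1 (y : R) : is_derive y 1 g1 (expR y - 1 - y).
  have -> : g1 = expR - (cst 1 + id + 2^-1 \*: (id ^+ 2)).
    by apply/funext => v /=.
  have := is_deriveB (is_derive_expR y) (is_deriveD (is_deriveD (is_derive_cst (1:R) y 1) (is_derive_id y 1)) (is_deriveZ (2^-1 : R) (is_deriveX 2 (is_derive_id y 1)))).
  move/is_derive_eq; apply.
  by rewrite /GRing.scale /= !mulr1 expr1; field.
have g1s v : 0 <= v * g1 v.
  have [->|v0] := eqVneq v 0; first by rewrite mul0r.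
  have [c [_ [_ e]]] := mvt0 dg1 v0.
  have e0 : g1 0 = 0 by rewrite /g1 expR0; field.
  move: e; rewrite e0 subr0 => ->.
  rewrite mulrCA; apply: mulr_ge0; first by have := expR_ge1Dx c; lra.
  by rewrite -expr2 sqr_ge0.
set g := fun u : R => expR u - (1 + u + 2^-1 * u ^+ 2 + 6^-1 * u ^+ 3).
have dg (y : R) : is_derive y 1 g (g1 y).
  have -> : g = expR - (cst 1 + id + 2^-1 \*: (id ^+ 2) + 6^-1 \*: (id ^+ 3)).
    by apply/funext => v /=.
  have := is_deriveB (is_derive_expR y) (is_deriveD (is_deriveD (is_deriveD (is_derive_cst (1:R) y 1) (is_derive_id y 1)) (is_deriveZ (2^-1 : R) (is_deriveX 2 (is_derive_id y 1)))) (is_deriveZ (6^-1 : R) (is_deriveX 3 (is_derive_id y 1)))).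
  move/is_derive_eq; apply.
  by rewrite /g1 /GRing.scale /= !mulr1 expr1; field.
have [->|u0] := eqVneq u 0; first by rewrite expR0; lra.
have [c [cu [_ e]]] := mvt0 dg u0.
have e0 : g 0 = 0 by rewrite /g expR0; field.
move: e; rewrite e0 subr0 => e.
have h1 := g1s c.
have : 0 <= g u.
  have h : 0 <= (c * u) * g u.
    rewrite e; have -> : c * u * (g1 c * u) = (c * g1 c) * (u * u) by ring.
    by apply: mulr_ge0 => //; rewrite -expr2 sqr_ge0.
  by rewrite pmulr_rge0 in h.
rewrite /g; lra.
Qed.

Lemma cexp_sign (c : R) : 0 <= c * (expR c - 1).
Proof.
case: (ltgtP c 0) => hc.
- by rewrite ltW // nmulr_rgt0 // subr_lt0 expR_lt1.
- apply: mulr_ge0; first exact: ltW.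
  by rewrite subr_ge0 -expR0 ler_expR ltW.
- by rewrite hc mul0r.
Qed.

Definition Qp (y : R) := y - 2^-1 * y ^+ 2 + 3^-1 * y ^+ 3.

Lemma ln_Q_ub (y : R) : -1 < y -> ln (1 + y) <= Qp y.
Proof.
move=> hy.
have hp : 0 < 1 + y by lra.
set v := ln (1 + y).
have ev : expR v = 1 + y by rewrite /v lnK.
set f := fun z : R => Qp (expR z - 1) - z.
have df (z : R) : is_derive z 1 f ((expR z - 1) ^+ 3).
  have -> : f = (expR - cst 1) - 2^-1 \*: (expR - cst 1) ^+ 2
       + 3^-1 \*: (expR - cst 1) ^+ 3 - id.
    by apply/funext => w; rewrite /f /Qp /=.
  have E := is_deriveB (is_derive_expR z) (is_derive_cst (1:R) z 1).
  have := is_deriveB (is_deriveD (is_deriveB E (is_deriveZ (2^-1:R) (is_deriveX 2 E))) (is_deriveZ (3^-1:R) (is_deriveX 3 E))) (is_derive_id z 1).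
  move/is_derive_eq; apply.
  rewrite /GRing.scale /= ?mulr1.
have -> : (expR - cst 1) z = expR z - 1 by [].
by field.
suff : 0 <= f v by rewrite /f ev /Qp; lra.
have [->|v0] := eqVneq v 0; first by rewrite /f /Qp expR0; lra.
have [c [cv [_ e]]] := mvt0 df v0.
have f0 : f 0 = 0 by rewrite /f /Qp expR0; field.
move: e; rewrite f0 subr0 => ->.
have hc := cexp_sign c.
set w := expR c - 1 in hc *.
have wv : 0 <= w * v.
  have cn0 : c != 0 by apply/eqP => c0; move: cv; rewrite c0 mul0r ltxx.
  have cc : 0 < c * c by rewrite lt_def mulf_neq0 //= -expr2 sqr_ge0.
  rewrite -(pmulr_rge0 _ cc) (_ : c * c * (w * v) = (c * w) * (c * v)); last by ring.
  by apply: mulr_ge0 => //; apply: ltW.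
have -> : w ^+ 3 * v = (w * w) * (w * v) by ring.
by apply: mulr_ge0 => //; rewrite -expr2 sqr_ge0.
Qed.

Lemma ln_Q_lb (y : R) : - 2^-1 <= y -> Qp y - 4 * y ^+ 4 <= ln (1 + y).
Proof.
move=> hy.
have hp : 0 < 1 + y by lra.
set v := ln (1 + y).
have ev : expR v = 1 + y by rewrite /v lnK.
set f := fun z : R => z - Qp (expR z - 1) + 4 * (expR z - 1) ^+ 4.
have df (z : R) : is_derive z 1 f ((expR z - 1) ^+ 3 * (16 * expR z - 1)).
  have -> : f = id - ((expR - cst 1) - 2^-1 \*: (expR - cst 1) ^+ 2
       + 3^-1 \*: (expR - cst 1) ^+ 3) + 4 \*: (expR - cst 1) ^+ 4.
    by apply/funext => w; rewrite /f /Qp /=.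
  have E := is_deriveB (is_derive_expR z) (is_derive_cst (1:R) z 1).
  have := is_deriveD (is_deriveB (is_derive_id z 1) (is_deriveD (is_deriveB E (is_deriveZ (2^-1:R) (is_deriveX 2 E))) (is_deriveZ (3^-1:R) (is_deriveX 3 E)))) (is_deriveZ (4:R) (is_deriveX 4 E)).
  move/is_derive_eq; apply.
  rewrite /GRing.scale /= ?mulr1.
have -> : (expR - cst 1) z = expR z - 1 by [].
by field.
suff : 0 <= f v by rewrite /f ev /Qp; lra.
have [->|v0] := eqVneq v 0; first by rewrite /f /Qp expR0; lra.
have [c [cv [cvl e]]] := mvt0 df v0.
have f0 : f 0 = 0 by rewrite /f /Qp expR0; field.
move: e; rewrite f0 subr0 => ->.
have hc := cexp_sign c.
have E16 : 0 < 16 * expR c - 1.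
  case: (ltgtP v 0) v0 => // hv _.
  - have vc : v < c.
      have c0 : c < 0 by rewrite -(nmulr_rgt0 _ hv) mulrC.
      by move: cvl; rewrite !ltr0_norm //; lra.
    have : expR v < expR c by rewrite ltr_expR.
    rewrite ev; lra.
  - have c0 : 0 < c by rewrite -(pmulr_rgt0 _ hv) mulrC.
    have := expR_ge1Dx c; lra.
set w := expR c - 1 in hc E16 *.
have wv : 0 <= w * v.
  have cn0 : c != 0 by apply/eqP => c0; move: cv; rewrite c0 mul0r ltxx.
  have cc : 0 < c * c by rewrite lt_def mulf_neq0 //= -expr2 sqr_ge0.
  rewrite -(pmulr_rge0 _ cc) (_ : c * c * (w * v) = (c * w) * (c * v)); last by ring.
  by apply: mulr_ge0 => //; apply: ltW.
have -> : w ^+ 3 * (16 * expR c - 1) * v = ((w * w) * (w * v)) * (16 * expR c - 1) by ring.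
apply: mulr_ge0; last lra.
by apply: mulr_ge0 => //; rewrite -expr2 sqr_ge0.
Qed.

Lemma QpN (x : R) : Qp (- x) = - x - 2^-1 * x ^+ 2 - 3^-1 * x ^+ 3.
Proof. rewrite /Qp; ring. Qed.

Lemma phi_ub (x t : R) : - 2^-1 <= x <= 2^-1 -> 0 <= t <= 1 ->
  2 - expR (t * ln (1 + x)) - expR (t * ln (1 - x)) <= 4^-1 * x ^+ 2 + 14 * x ^+ 4.
Proof.
move=> /andP[hx1 hx2] /andP[ht0 ht1].
set a := ln (1 + x); set b := ln (1 - x).
have Ha2 : Qp x - 4 * x ^+ 4 <= a by apply: ln_Q_lb.
have Ha1 : a <= Qp x by apply: ln_Q_ub; lra.
have Hb1 : b <= Qp (- x) by apply: ln_Q_ub; lra.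
have Hb2 : Qp (- x) - 4 * (- x) ^+ 4 <= b by apply: ln_Q_lb; lra.
rewrite QpN in Hb1 Hb2; rewrite /Qp in Ha1 Ha2.
have x4 : (- x) ^+ 4 = x ^+ 4 by rewrite exprNn; field.
rewrite x4 in Hb2.
have X2 : 0 <= x ^+ 2 by rewrite sqr_ge0.
have X4 : 0 <= x ^+ 4 by rewrite exprn_even_ge0.
have X2le : x ^+ 2 <= 4^-1.
  have : x ^+ 2 - 4^-1 = (x - 2^-1) * (x + 2^-1) by field.
  have : (x - 2^-1) * (x + 2^-1) <= 0 by rewrite mulr_le0_ge0 //; lra.
  lra.
have X4le : x ^+ 4 <= 4^-1 * x ^+ 2.
  rewrite (_ : x ^+ 4 = x ^+ 2 * x ^+ 2); last by field.
  by rewrite mulrC ler_wpM2r.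
set s := a + b.
have S1a : s <= - x ^+ 2 by rewrite /s; lra.
have S1b : - x ^+ 2 - 8 * x ^+ 4 <= s by rewrite /s; lra.
set e1 := a - (x - 2^-1 * x ^+ 2); set e2 := b - (- x - 2^-1 * x ^+ 2).
set r := e1 - e2 - 2 / 3 * x ^+ 3.
have r1 : r <= 4 * x ^+ 4 by rewrite /r /e1 /e2; lra.
have r2 : - (4 * x ^+ 4) <= r by rewrite /r /e1 /e2; lra.
have xr : - (4 * x ^+ 4) <= 2 * x * r.
  have h1 : 0 <= (2^-1 - x) * (4 * x ^+ 4 - r) by apply: mulr_ge0; lra.
  have h2 : 0 <= (2^-1 + x) * (4 * x ^+ 4 + r) by apply: mulr_ge0; lra.
  have : (2^-1 - x) * (4 * x ^+ 4 - r) + (2^-1 + x) * (4 * x ^+ 4 + r) = 4 * x ^+ 4 + 2 * x * r.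
    by rewrite /r; field.
  lra.
have p0 : 0 <= x ^+ 2 * (- (e1 + e2)).
  by apply: mulr_ge0 => //; rewrite /e1 /e2; lra.
have E1 : 0 <= e1 ^+ 2 by rewrite sqr_ge0.
have E2 : 0 <= e2 ^+ 2 by rewrite sqr_ge0.
have S2 : 2 * x ^+ 2 - 4 * x ^+ 4 <= a ^+ 2 + b ^+ 2.
  have : a ^+ 2 + b ^+ 2 = 2 * x ^+ 2 + 2^-1 * x ^+ 4 + (4 / 3 * x ^+ 4 + 2 * x * r)
           + x ^+ 2 * (- (e1 + e2)) + e1 ^+ 2 + e2 ^+ 2.
    by rewrite /r /e1 /e2; field.
  lra.
set d := a - b.
have D : d ^+ 2 <= 9 * x ^+ 2.
  have d1 : d <= 2 * x + 2 / 3 * x ^+ 3 + 4 * x ^+ 4 by rewrite /d; lra.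
  have d2 : 2 * x + 2 / 3 * x ^+ 3 - 4 * x ^+ 4 <= d by rewrite /d; lra.
  have -> : 9 * x ^+ 2 = (3 * x) ^+ 2 by field.
  rewrite -subr_ge0 (_ : (3 * x) ^+ 2 - d ^+ 2 = (3 * x - d) * (3 * x + d)); last by field.
  case: (lerP 0 x) => hx.
  - have x3 : x ^+ 2 * x <= 4^-1 * x by rewrite ler_wpM2r.
    have x3e : x ^+ 3 = x ^+ 2 * x by ring.
    have x4' : x * x <= 2^-1 * x by rewrite ler_wpM2r.
    have x4e : x ^+ 2 = x * x by ring.
    have x30 : 0 <= x ^+ 3 by rewrite exprn_ge0.
    apply: mulr_ge0; lra.
  - have x3 : 4^-1 * x <= x ^+ 2 * x by rewrite ler_wnM2r //; lra.
    have x3e : x ^+ 3 = x ^+ 2 * x by ring.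
    have hx' : 0 <= - x by lra.
    have x4' : (- x) * (- x) <= 2^-1 * (- x) by rewrite (ler_wpM2r hx'); lra.
    have x4e : x ^+ 2 = (- x) * (- x) by ring.
    have x30 : x ^+ 2 * x <= 0 by rewrite mulr_ge0_le0 //; lra.
    rewrite (_ : (3 * x - d) * (3 * x + d) = (d - 3 * x) * (- d - 3 * x)); last by field.
    apply: mulr_ge0; lra.
set M := a ^+ 2 - a * b + b ^+ 2.
have M0 : 0 <= M.
  rewrite (_ : M = (s ^+ 2 + 3 * d ^+ 2) / 4); last by rewrite /M /s /d; field.
  have := sqr_ge0 s; have := sqr_ge0 d; lra.
have M1 : M <= 8 * x ^+ 2.
  rewrite (_ : M = (s ^+ 2 + 3 * d ^+ 2) / 4); last by rewrite /M /s /d; field.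
  have s2 : s ^+ 2 <= 9 * x ^+ 4.
    have s3 : - (3 * x ^+ 2) <= s by lra.
    rewrite (_ : 9 * x ^+ 4 = (3 * x ^+ 2) ^+ 2); last by field.
    rewrite -subr_ge0 (_ : (3 * x ^+ 2) ^+ 2 - s ^+ 2 = (3 * x ^+ 2 - s) * (3 * x ^+ 2 + s)); last by field.
    apply: mulr_ge0; lra.
  lra.
have S3 : - (24 * x ^+ 4) <= a ^+ 3 + b ^+ 3.
  rewrite (_ : a ^+ 3 + b ^+ 3 = s * M); last by rewrite /s /M; field.
  have h1 : 0 <= (s + 3 * x ^+ 2) * M by apply: mulr_ge0; lra.
  have h2 : 3 * x ^+ 2 * M <= 3 * x ^+ 2 * (8 * x ^+ 2) by rewrite ler_wpM2l //; lra.
  have : 3 * x ^+ 2 * (8 * x ^+ 2) = 24 * x ^+ 4 by field.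
  have : (s + 3 * x ^+ 2) * M = s * M + 3 * x ^+ 2 * M by field.
  lra.
have T1 := expR_T3 (t * a); have T2 := expR_T3 (t * b).
have t2 : 0 <= t ^+ 2 by rewrite sqr_ge0.
have t3 : 0 <= t ^+ 3 by rewrite exprn_ge0.
have t3le : t ^+ 3 <= 1 by rewrite exprn_ile1.
have t2le : t ^+ 2 <= t by rewrite (_ : t ^+ 2 = t * t) ?ler_piMl //; field.
have A1 : t * (- x ^+ 2 - 8 * x ^+ 4) <= t * s by rewrite ler_wpM2l.
have A1' : t * (8 * x ^+ 4) <= 8 * x ^+ 4 by rewrite ler_piMl //; lra.
have A2 : t ^+ 2 * (2 * x ^+ 2 - 4 * x ^+ 4) <= t ^+ 2 * (a ^+ 2 + b ^+ 2) by rewrite ler_wpM2l.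
have A2' : t ^+ 2 * (4 * x ^+ 4) <= 4 * x ^+ 4.
  by rewrite ler_piMl //; [lra | apply: (le_trans t2le)].
have A3 : t ^+ 3 * (- (24 * x ^+ 4)) <= t ^+ 3 * (a ^+ 3 + b ^+ 3) by rewrite ler_wpM2l.
have A3' : t ^+ 3 * (24 * x ^+ 4) <= 24 * x ^+ 4 by rewrite ler_piMl //; lra.
have Q : (t - t ^+ 2) * x ^+ 2 <= 4^-1 * x ^+ 2.
  rewrite ler_wpM2r //.
  have : 0 <= (t - 2^-1) ^+ 2 by rewrite sqr_ge0.
  have : (t - 2^-1) ^+ 2 = t ^+ 2 - t + 4^-1 by field.
  lra.
have EQ : 1 + t * a + 2^-1 * (t * a) ^+ 2 + 6^-1 * (t * a) ^+ 3
        + (1 + t * b + 2^-1 * (t * b) ^+ 2 + 6^-1 * (t * b) ^+ 3)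
        = 2 + t * s + 2^-1 * (t ^+ 2 * (a ^+ 2 + b ^+ 2)) + 6^-1 * (t ^+ 3 * (a ^+ 3 + b ^+ 3)).
  by rewrite /s; field.
have : t * (- x ^+ 2 - 8 * x ^+ 4) = - (t * x ^+ 2) - t * (8 * x ^+ 4) by field.
have : t ^+ 2 * (2 * x ^+ 2 - 4 * x ^+ 4) = 2 * (t ^+ 2 * x ^+ 2) - t ^+ 2 * (4 * x ^+ 4) by field.
have : t ^+ 3 * (- (24 * x ^+ 4)) = - (t ^+ 3 * (24 * x ^+ 4)) by field.
have : (t - t ^+ 2) * x ^+ 2 = t * x ^+ 2 - t ^+ 2 * x ^+ 2 by field.
lra.
Qed.

Lemma phi_half (x : R) : -1 < x < 1 ->
  4^-1 * x ^+ 2 <= 2 - expR (2^-1 * ln (1 + x)) - expR (2^-1 * ln (1 - x)).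
Proof.
move=> /andP[h1 h2].
set u := expR (2^-1 * ln (1 + x)); set v := expR (2^-1 * ln (1 - x)).
have uu : u * u = 1 + x.
  by rewrite /u -expRD -mulrDl (_ : 2^-1 + 2^-1 = 1 :> R) ?mul1r ?lnK ?posrE //; [lra | field].
have vv : v * v = 1 - x.
  by rewrite /v -expRD -mulrDl (_ : 2^-1 + 2^-1 = 1 :> R) ?mul1r ?lnK ?posrE //; [lra | field].
have u0 : 0 < u by apply: expR_gt0.
have v0 : 0 < v by apply: expR_gt0.
set w := u * v.
have w0 : 0 < w by apply: mulr_gt0.
have ww : w * w = 1 - x ^+ 2.
  have -> : w * w = (u * u) * (v * v) by rewrite /w; ring.
  by rewrite uu vv; ring.
have X2 : x ^+ 2 < 1.
  have : x ^+ 2 - 1 = (x - 1) * (x + 1) by ring.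
  have : (x - 1) * (x + 1) < 0 by rewrite nmulr_rlt0; lra.
  lra.
have X4 : 0 <= x ^+ 4 by rewrite exprn_even_ge0.
have wle : w <= 1 - 2^-1 * x ^+ 2.
  have h : 0 <= (1 - 2^-1 * x ^+ 2 - w) * (1 - 2^-1 * x ^+ 2 + w).
    have : (1 - 2^-1 * x ^+ 2 - w) * (1 - 2^-1 * x ^+ 2 + w) = 4^-1 * x ^+ 4.
      rewrite (_ : (1 - 2^-1 * x ^+ 2 - w) * (1 - 2^-1 * x ^+ 2 + w) =
          (1 - 2^-1 * x ^+ 2) ^+ 2 - w * w); last by ring.
      by rewrite ww; field.
    move=> ->; lra.
  rewrite pmulr_lge0 in h; first lra.
  lra.
have s2 : (u + v) ^+ 2 <= 4 - x ^+ 2.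
  rewrite (_ : (u + v) ^+ 2 = u * u + v * v + 2 * w); last by rewrite /w; ring.
  rewrite uu vv; lra.
have : u + v <= 2 - 4^-1 * x ^+ 2.
  have h : 0 <= (2 - 4^-1 * x ^+ 2 - (u + v)) * (2 - 4^-1 * x ^+ 2 + (u + v)).
    rewrite (_ : (2 - 4^-1 * x ^+ 2 - (u + v)) * (2 - 4^-1 * x ^+ 2 + (u + v)) =
      (4 - x ^+ 2 - (u + v) ^+ 2) + 16^-1 * x ^+ 4); last by field.
    lra.
  rewrite pmulr_lge0 in h; first lra.
  lra.
lra.
Qed.

Lemma powR_expR (a s : R) : 0 < a -> a `^ s = expR (s * ln a).
Proof. by move=> a0; rewrite /powR gt_eqF. Qed.

Lemma term_rw (c l t : R) : 0 < c -> 0 < c + l ->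
  c `^ (1 - t) * (c + l) `^ t = c * expR (t * ln (1 + l / c)).
Proof.
move=> c0 cl0.
have e : c + l = c * (1 + l / c) by field; lra.
have p : 0 < 1 + l / c.
  have -> : 1 + l / c = (c + l) / c by field; lra.
  by apply: divr_gt0.
rewrite !powR_expR // e lnM ?posrE // -expRD.
rewrite (_ : (1 - t) * ln c + t * (ln c + ln (1 + l / c)) = ln c + t * ln (1 + l / c)); last by ring.
by rewrite expRD lnK.
Qed.

End H.
Arguments Qp {R}.


Section Key.
Variable R : realType.

Lemma amgm (a b t : R) : 0 < a -> 0 < b -> 0 <= t <= 1 ->
  a `^ (1 - t) * b `^ t <= (1 - t) * a + t * b.
Proof.
move=> a0 b0 /andP[t0 t1].
rewrite !powR_expR // -expRD.
set s := (1 - t) * ln a + t * ln b.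
have ha : expR s * (1 + (ln a - s)) <= a.
  have E : expR s * expR (ln a - s) = a by rewrite -expRD addrC subrK lnK.
  rewrite -[X in _ <= X]E.
  by rewrite ler_wpM2l ?expR_ge0 // expR_ge1Dx.
have hb : expR s * (1 + (ln b - s)) <= b.
  have E : expR s * expR (ln b - s) = b by rewrite -expRD addrC subrK lnK.
  rewrite -[X in _ <= X]E.
  by rewrite ler_wpM2l ?expR_ge0 // expR_ge1Dx.
have ha' : (1 - t) * (expR s * (1 + (ln a - s))) <= (1 - t) * a by rewrite ler_wpM2l //; lra.
have hb' : t * (expR s * (1 + (ln b - s))) <= t * b by rewrite ler_wpM2l.
have : (1 - t) * (expR s * (1 + (ln a - s))) + t * (expR s * (1 + (ln b - s))) = expR s.
  by rewrite /s; ring.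
lra.
Qed.

Lemma gm_lb (a b t : R) : 0 < a -> 0 < b -> 0 <= t <= 1 ->
  (1 - t) * a + t * b - (b - a) ^+ 2 / b <= a `^ (1 - t) * b `^ t.
Proof.
move=> a0 b0 /andP[t0 t1].
rewrite !powR_expR // -expRD.
set L := ln b - ln a.
have -> : (1 - t) * ln a + t * ln b = ln a + t * L by rewrite /L; ring.
rewrite expRD lnK //.
have hL : 1 - a / b <= L.
  have hpos : -1 < a / b - 1 by have := divr_gt0 a0 b0; lra.
  have h := @le_ln1Dx R _ hpos.
  have : ln (a / b) = - L by rewrite ln_div ?posrE // /L; ring.
  rewrite (_ : 1 + (a / b - 1) = a / b) in h; last by ring.
  lra.
have h1 := expR_ge1Dx (t * L).
have h2 : a * (1 + t * L) <= a * expR (t * L) by rewrite ler_wpM2l // ltW.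
have h3 : a * (t * (1 - a / b)) <= a * (t * L).
  apply: ler_wpM2l; first exact: ltW.
  by apply: ler_wpM2l.
have e : a * (t * (1 - a / b)) = t * (b - a) - t * ((b - a) ^+ 2 / b).
  by field; lra.
have h4 : t * ((b - a) ^+ 2 / b) <= (b - a) ^+ 2 / b.
  rewrite ler_piMl //; apply: divr_ge0; [exact: sqr_ge0 | exact: ltW].
have : a * (1 + t * L) = a + a * (t * L) by ring.
lra.
Qed.

Lemma ln_1m_bounds (u : R) : 0 <= u <= 2^-1 ->
  u <= - ln (1 - u) <= u + 2 * u ^+ 2.
Proof.
move=> /andP[u0 u1].
apply/andP; split.
  have hpos : -1 < - u by lra.
  have := @le_ln1Dx R _ hpos.
  lra.
have p : 0 < 1 - u by lra.
have e : - ln (1 - u) = ln ((1 - u)^-1) by rewrite lnV ?posrE.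
have iu : 0 < (1 - u)^-1 by rewrite invr_gt0.
have hpos : -1 < (1 - u)^-1 - 1 by lra.
have h := @le_ln1Dx R _ hpos.
rewrite (_ : 1 + ((1 - u)^-1 - 1) = (1 - u)^-1) in h; last by ring.
rewrite e; apply: (le_trans h).
rewrite -subr_ge0.
have -> : u + 2 * u ^+ 2 - ((1 - u)^-1 - 1) = u ^+ 2 * (1 - 2 * u) / (1 - u).
  by field; lra.
apply: divr_ge0; last lra.
apply: mulr_ge0; [exact: sqr_ge0 | lra].
Qed.



Lemma first_term (c k N t : R) : 0 < c -> 0 < k -> 0 < N ->
  (c / N) `^ (1 - t) * (k / N) `^ t = c `^ (1 - t) * k `^ t / N.
Proof.
move=> c0 k0 N0.
rewrite !powR_expR ?divr_gt0 // !ln_div ?posrE // -!expRD.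
rewrite (_ : (1 - t) * (ln c - ln N) + t * (ln k - ln N)
   = ((1 - t) * ln c + t * ln k) - ln N); last by ring.
by rewrite expRB lnK.
Qed.

End Key.

Definition hfun {R : realType} (p q t : R) :=
  p `^ (1 - t) * q `^ t + (1 - p) `^ (1 - t) * (1 - q) `^ t.

Lemma key_est {R : realType} (c k N t : R) : 0 < c -> 0 < k -> k <= 2 * c -> 8 * c <= N -> 1 <= N ->
  0 <= t <= 1 ->
  0 < hfun (c / N) (k / N) t /\
  0 <= - ln (hfun (c / N) (k / N) t) - (c * (1 - t) + k * t - c `^ (1 - t) * k `^ t) / N
    <= (2 * c ^+ 2 + 2 * (2 * c + 2 * c ^+ 2) ^+ 2) / N ^+ 2.
Proof.
move=> c0 k0 k2c N8 N1 ht.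
have N0 : 0 < N by lra.
have iN0 : 0 < N^-1 by rewrite invr_gt0.
have NiN : N * N^-1 = 1 by rewrite mulfV // gt_eqF.
have iN1 : N^-1 <= 1.
  have : 0 <= (N - 1) * N^-1 by apply: mulr_ge0; lra.
  have : (N - 1) * N^-1 = N * N^-1 - N^-1 by ring.
  lra.
have ciN : c * N^-1 <= 8^-1.
  have : 0 <= (N - 8 * c) * N^-1 by apply: mulr_ge0; lra.
  have : (N - 8 * c) * N^-1 = N * N^-1 - 8 * (c * N^-1) by ring.
  lra.
have kiN : k * N^-1 <= 4^-1.
  have : k * N^-1 <= 2 * c * N^-1 by rewrite ler_wpM2r // ltW.
  lra.
have ckN0 : 0 < c * N^-1 by apply: mulr_gt0.
have kN0 : 0 < k * N^-1 by apply: mulr_gt0.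
rewrite /hfun first_term //.
set GM := c `^ (1 - t) * k `^ t.
have GM0 : 0 <= GM by rewrite mulr_ge0 ?powR_ge0.
have GM1 := @amgm R c k t c0 k0 ht.
rewrite -/GM in GM1.
case/andP: ht => t0 t1.
set a := 1 - c / N; set b := 1 - k / N.
have a0 : 0 < a by rewrite /a; lra.
have b0 : 0 < b by rewrite /b; lra.
have b34 : 3 / 4 <= b by rewrite /b; lra.
have S1 := @amgm R a b t a0 b0 (introT andP (conj t0 t1)).
have S2 := @gm_lb R a b t a0 b0 (introT andP (conj t0 t1)).
set S := a `^ (1 - t) * b `^ t in S1 S2 *.
set err := (1 - t) * a + t * b - S.
have err0 : 0 <= err by rewrite /err; lra.
have ba : (b - a) ^+ 2 <= c ^+ 2 * N^-1 ^+ 2.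
  have -> : b - a = (c - k) * N^-1 by rewrite /a /b; ring.
  rewrite exprMn ler_wpM2r ?sqr_ge0 //.
  rewrite -subr_ge0 (_ : c ^+ 2 - (c - k) ^+ 2 = k * (2 * c - k)); last by ring.
  by apply: mulr_ge0; lra.
have err1 : err <= 2 * (c ^+ 2 * N^-1 ^+ 2).
  have h1 : (b - a) ^+ 2 / b <= 2 * (b - a) ^+ 2.
    rewrite ler_pdivrMr //.
    have : 0 <= (b - a) ^+ 2 * (2 * b - 1) by apply: mulr_ge0; [exact: sqr_ge0 | lra].
    have : (b - a) ^+ 2 * (2 * b - 1) = 2 * (b - a) ^+ 2 * b - (b - a) ^+ 2 by ring.
    lra.
  rewrite /err; lra.
set G := c * (1 - t) + k * t - GM.
have G0 : 0 <= G by rewrite /G; lra.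
have G1 : G <= 2 * c.
  have : k * t <= 2 * c * t by rewrite ler_wpM2r.
  have : c * (1 - t) + 2 * c * t = 2 * c - c * (1 - t) + 0 by ring.
  rewrite /G; nra.
set u := G / N + err.
have eh : GM / N + S = 1 - u.
  by rewrite /u /err /G /a /b; field; lra.
rewrite eh.
have GN1 : G / N <= 2 * (c * N^-1) by rewrite (_ : 2 * (c * N^-1) = (2 * c) * N^-1); [rewrite ler_wpM2r // ltW | ring].
have GN0 : 0 <= G / N by rewrite divr_ge0 // ltW.
have ci2 : c ^+ 2 * N^-1 ^+ 2 <= 8^-1 * (c * N^-1).
  rewrite (_ : c ^+ 2 * N^-1 ^+ 2 = (c * N^-1) * (c * N^-1)); last by ring.
  by rewrite mulrC ler_wpM2r // ltW.
have u0 : 0 <= u by rewrite /u; lra.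
have u1 : u <= 2^-1 by rewrite /u; lra.
have [lb ub] := andP (@ln_1m_bounds R u (introT andP (conj u0 u1))).
split; first lra.
have uA : u <= (2 * c + 2 * c ^+ 2) * N^-1.
  have i2 : N^-1 ^+ 2 <= N^-1.
    have : 0 <= (1 - N^-1) * N^-1 by apply: mulr_ge0; lra.
    have : (1 - N^-1) * N^-1 = N^-1 - N^-1 ^+ 2 by ring.
    lra.
  have : c ^+ 2 * N^-1 ^+ 2 <= c ^+ 2 * N^-1 by apply: ler_wpM2l => //; exact: sqr_ge0.
  have : (2 * c + 2 * c ^+ 2) * N^-1 = 2 * (c * N^-1) + 2 * (c ^+ 2 * N^-1) by ring.
  rewrite /u; lra.
have u2 : u ^+ 2 <= ((2 * c + 2 * c ^+ 2) * N^-1) ^+ 2.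
  rewrite -subr_ge0 (_ : ((2 * c + 2 * c ^+ 2) * N^-1) ^+ 2 - u ^+ 2 = ((2 * c + 2 * c ^+ 2) * N^-1 - u) * ((2 * c + 2 * c ^+ 2) * N^-1 + u)); last by ring.
  apply: mulr_ge0; lra.
have -> : (2 * c ^+ 2 + 2 * (2 * c + 2 * c ^+ 2) ^+ 2) / N ^+ 2
   = 2 * (c ^+ 2 * N^-1 ^+ 2) + 2 * ((2 * c + 2 * c ^+ 2) * N^-1) ^+ 2.
  by field; lra.
have uE : u = G / N + err by [].
apply/andP; split; lra.
Qed.


Section P1a.
Variable R : realType.

Lemma powR_prod (T : finType) (A : {pred T}) (F : T -> R) (s : R) :
  (forall i, 0 <= F i) ->
  (\prod_(i in A) F i) `^ s = \prod_(i in A) (F i `^ s).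
Proof.
move=> F0.
suff : 0 <= \prod_(i in A) F i /\ (\prod_(i in A) F i) `^ s = \prod_(i in A) (F i `^ s) by case.
apply: (big_rec2 (fun x y => 0 <= x /\ x `^ s = y)) => [|i x y _ [x0 <-]].
  by split => //; rewrite powR1.
by split; [rewrite mulr_ge0 | rewrite powRM].
Qed.

Lemma sum_subset_prod (T : finType) (U : {set T}) (X Y : T -> R) :
  \sum_(J : {set T} | J \subset U) \prod_(i in U) (if i \in J then X i else Y i)
  = \prod_(i in U) (X i + Y i).
Proof.
set X' := fun i => if i \in U then X i else 0.
set Y' := fun i => if i \in U then Y i else 1.
have -> : \prod_(i in U) (X i + Y i) = \prod_i (X' i + Y' i).
  rewrite big_mkcond; apply: eq_bigr => i _.
  by rewrite /X' /Y'; case: (i \in U); rewrite ?addr0 ?add0r.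
rewrite bigA_distr.
match goal with |- ?L = _ => change (L = \sum_(J in {set T}) \prod_i (if i \in J then X' i else Y' i)) end.
rewrite [RHS](bigID (fun J : {set T} => J \subset U)) /=.
rewrite [X in _ = _ + X]big1 ?addr0; last first.
  move=> J /subsetPn [i iJ iU].
  rewrite (bigD1 i) //= iJ /X' (negbTE iU) mul0r //.
apply: eq_big => [J|J JU] //.
rewrite [LHS]big_mkcond; apply: eq_bigr => i _.
rewrite /X' /Y'; case iU: (i \in U) => //.
have -> : (i \in J) = false.
    by apply/negbTE; apply: contraFN iU => iJ; move/fintype.subsetP: JU; apply.
by [].
Qed.


Lemma chernoff_factor (c lam : R) (n : nat) (t : R) :
  0 <= c / n%:R <= 1 -> 0 <= (c + lam) / n%:R <= 1 -> 0 <= (c - lam) / n%:R <= 1 ->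
  chernoff_sum c lam n t =
  \prod_(e in upper_pairs n) hfun (c / n%:R) (sbm_q c lam n e.1 e.2) t.
Proof.
move=> /andP[p0 p1] /andP[q0 q1] /andP[r0 r1].
have sq0 : forall i j, 0 <= sbm_q c lam n i j.
  by move=> i j; rewrite /sbm_q; case: ifP.
have sq1 : forall i j, 0 <= 1 - sbm_q c lam n i j.
  by move=> i j; rewrite /sbm_q; case: ifP; lra.
rewrite /chernoff_sum -sum_subset_prod; apply: eq_bigr => A _.
rewrite /P0 /P1 /graph_prob !powR_prod; last first.
- by move=> e; case: ifP => _; rewrite /er_q; lra.
- by move=> e; case: ifP => _; [apply: sq0 | apply: sq1].
rewrite -big_split /=; apply: eq_bigr => e _.
by case: ifP.
Qed.

Lemma prod_split_same (n : nat) (F : 'I_n * 'I_n -> R) (a b : R) :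
  (forall e, F e = if same_block n e.1 e.2 then a else b) ->
  \prod_(e in upper_pairs n) F e =
  a ^+ #|[pred e : 'I_n * 'I_n | (e \in upper_pairs n) && same_block n e.1 e.2]|
  * b ^+ #|[pred e : 'I_n * 'I_n | (e \in upper_pairs n) && ~~ same_block n e.1 e.2]|.
Proof.
move=> hF.
rewrite (bigID (fun e => same_block n e.1 e.2)) /=.
rewrite (eq_bigr (fun=> a)); last by move=> e /andP[_ h]; rewrite hF h.
rewrite [X in _ * X](eq_bigr (fun=> b)); last first.
  by move=> e /andP[_ /negbTE h]; rewrite hF h.
by rewrite !prodr_const.
Qed.

End P1a.

Section Counting.
Local Open Scope nat_scope.

Lemma sum_ind (n a b : nat) :
  \sum_(j < n) ((a <= j) && (j < b) : nat) = minn n b - a.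
Proof.
elim: n => [|n IH]; first by rewrite big_ord0; lia.
rewrite big_ord_recr /= IH.
case: (leqP a n) => h1; case: (ltnP n b) => h2 /=; lia.
Qed.

Lemma tri_sum (m : nat) : (\sum_(0 <= i < m) (m - i.+1)) * 2 = m * (m - 1).
Proof.
elim: m => [|m IH]; first by rewrite big_geq.
rewrite big_nat_recl //.
rewrite (eq_bigr (fun i => m - i.+1)); last by move=> i _; lia.
rewrite mulnDl IH; nia.
Qed.

Lemma card_as_sum (n : nat) (P : 'I_n * 'I_n -> bool) :
  #|[pred e : 'I_n * 'I_n | P e]| = \sum_(i < n) \sum_(j < n) (P (i, j) : nat).
Proof.
rewrite -sum1_card big_mkcond /=.
rewrite pair_bigA /=.
apply: eq_bigr => [[i j]] _.
by rewrite inE /=; case: (P (i, j)).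
Qed.

Lemma card_out (m : nat) :
  #|[pred e : 'I_(2 * m) * 'I_(2 * m) | (e \in upper_pairs (2 * m)) && ~~ same_block (2 * m) e.1 e.2]| = m * m.
Proof.
rewrite card_as_sum.
rewrite (eq_bigr (fun i : 'I_(2 * m) => if i < m then m else 0)).
  rewrite -(big_mkord xpredT (fun i => if i < m then m else 0)).
  rewrite (big_cat_nat (n := m)) //=; last lia.
  rewrite big_nat_cond [X in X + _](eq_bigr (fun=> m)); last by move=> i /andP[/andP[_ ->]].
  rewrite [X in _ + X]big_nat_cond [X in _ + X](eq_bigr (fun=> 0)); last first.
    by move=> i /andP[/andP[h _] _]; rewrite ltnNge h.
  rewrite [X in _ + X]big1_eq addn0 -big_nat_cond.
  by rewrite sum_nat_const_nat subn0.
move=> i _.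
under eq_bigr => j _ do rewrite inE /=.
have hm : (2 * m)./2 = m by rewrite mul2n doubleK.
rewrite /same_block hm.
case: ifP => hi.
- transitivity (\sum_(j < 2 * m) ((m <= j) && (j < 2 * m) : nat)); last by rewrite sum_ind; lia.
  apply: eq_bigr => j _.
  case: (ltnP j m) => hj /=; first by rewrite andbF.
  rewrite (ltn_ord j) andbT.
  by rewrite (leq_trans hi hj).
- apply: big1 => j _.
  case: (ltnP j m) => hj /=; last by rewrite andbF.
  have -> : (i < j) = false by apply/negbTE; move/negbT: hi; rewrite -leqNgt => hi; lia.
  by [].
Qed.

Lemma card_in (m : nat) :
  #|[pred e : 'I_(2 * m) * 'I_(2 * m) | (e \in upper_pairs (2 * m)) && same_block (2 * m) e.1 e.2]| = m * (m - 1).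
Proof.
rewrite card_as_sum.
rewrite (eq_bigr (fun i : 'I_(2 * m) => if i < m then m - i.+1 else 2 * m - i.+1)).
  rewrite -(big_mkord xpredT (fun i => if i < m then m - i.+1 else 2 * m - i.+1)).
  rewrite (big_cat_nat (n := m)) //=; last lia.
  rewrite big_nat_cond [X in X + _](eq_bigr (fun i => m - i.+1)); last by move=> i /andP[/andP[_ ->]].
  rewrite [X in _ + X]big_nat_cond [X in _ + X](eq_bigr (fun i => 2 * m - i.+1)); last first.
    by move=> i /andP[/andP[h _] _]; rewrite ltnNge h.
  rewrite -!big_nat_cond.
  have E : \sum_(m <= i < 2 * m) (2 * m - i.+1) = \sum_(0 <= i < m) (m - i.+1).
    rewrite -{1}[m]add0n big_addn (_ : 2 * m - m = m); last lia.
    by apply: eq_bigr => i _; lia.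
  rewrite E; have := tri_sum m; lia.
move=> i _.
under eq_bigr => j _ do rewrite inE /=.
have hm : (2 * m)./2 = m by rewrite mul2n doubleK.
rewrite /same_block hm.
case: ifP => hi.
- transitivity (\sum_(j < 2 * m) ((i.+1 <= j) && (j < m) : nat)); last first.
    rewrite sum_ind; lia.
  apply: eq_bigr => j _.
  case: (ltnP j m) => hj /=; last by rewrite andbF.
  by rewrite andbT.
- transitivity (\sum_(j < 2 * m) ((i.+1 <= j) && (j < 2 * m) : nat)); last first.
    rewrite sum_ind; lia.
  apply: eq_bigr => j _.
  rewrite (ltn_ord j) andbT.
  case: (ltnP j m) => hj /=; last by rewrite andbT.
  rewrite andbF.
  have -> : (i < j) = false by apply/negbTE; move/negbT: hi; rewrite -leqNgt => hi; lia.
  by [].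
Qed.

End Counting.



Section P23.
Variable R : realType.

Lemma Jelem_rw (c l t : R) : 0 < c -> `|l| < c ->
  (2 * c - c `^ (1 - t) * ((c + l) `^ t + (c - l) `^ t)) / 4
  = c / 4 * (2 - expR (t * ln (1 + l / c)) - expR (t * ln (1 - l / c))).
Proof.
move=> c0 hl.
have h1 : 0 < c + l by move: hl; rewrite ltr_norml; lra.
have h2 : 0 < c + - l by move: hl; rewrite ltr_norml; lra.
rewrite mulrDr term_rw // term_rw // mulNr.
by field.
Qed.

Lemma Jfun_bounds (c l : R) : 0 < c -> `|l| < c / 2 ->
  l ^+ 2 / (16 * c) <= Jfun c l <= l ^+ 2 / (16 * c) + 7 / 2 * (l ^+ 4 / c ^+ 3).
Proof.
move=> c0 hl.
have hl' : `|l| < c by lra.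
set x := l / c.
have hx : - 2^-1 <= x <= 2^-1.
  move: hl; rewrite ltr_norml => /andP[a b].
  apply/andP; split; rewrite /x.
  - by rewrite ler_pdivlMr //; lra.
  - by rewrite ler_pdivrMr //; lra.
set S := [set (2 * c - c `^ (1 - t) * ((c + l) `^ t + (c - l) `^ t)) / 4 | t in `[0, 1]].
set B := l ^+ 2 / (16 * c) + 7 / 2 * (l ^+ 4 / c ^+ 3).
have ub : ubound S B.
  move=> y [t ht <-].
  rewrite Jelem_rw //.
  have ht' : 0 <= t <= 1 by move: ht; rewrite /= in_itv /=.
  have := @phi_ub R x t hx ht'.
  rewrite -/x.
  have -> : B = c / 4 * (4^-1 * x ^+ 2 + 14 * x ^+ 4) by rewrite /B /x; field; lra.
  move=> h; rewrite ler_wpM2l //; lra.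
have hS : S (l ^+ 2 / (16 * c) + (c / 4 * (2 - expR (2^-1 * ln (1 + x)) - expR (2^-1 * ln (1 - x))) - l ^+ 2 / (16 * c))).
  exists (2^-1); first by rewrite /= in_itv /=; lra.
  by rewrite Jelem_rw // -/x; ring.
have nS : S !=set0 by exists (l ^+ 2 / (16 * c) + (c / 4 * (2 - expR (2^-1 * ln (1 + x)) - expR (2^-1 * ln (1 - x))) - l ^+ 2 / (16 * c))).
rewrite /Jfun -/S; apply/andP; split; last exact: ge_sup.
have := ub_le_sup (ex_intro _ B ub) hS.
have : -1 < x < 1 by lra.
move/(@phi_half R x).
have -> : l ^+ 2 / (16 * c) = c / 4 * (4^-1 * x ^+ 2) by rewrite /x; field; lra.
move=> h1 h2.
apply: le_trans h2.
have : c / 4 * (4^-1 * x ^+ 2) <= c / 4 * (2 - expR (2^-1 * ln (1 + x)) - expR (2^-1 * ln (1 - x))).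
  by rewrite ler_wpM2l //; lra.
lra.
Qed.

Lemma Ifun_bound (c l : R) : 0 < c -> `|l| < c / 2 ->
  `|Ifun c l / 4 - l ^+ 2 / (16 * c)| <= 2^-1 * (l ^+ 4 / c ^+ 3).
Proof.
move=> c0 hl.
set x := l / c.
have hx : - 2^-1 <= x <= 2^-1.
  move: hl; rewrite ltr_norml => /andP[a b].
  apply/andP; split; rewrite /x.
  - by rewrite ler_pdivlMr //; lra.
  - by rewrite ler_pdivrMr //; lra.
case/andP: hx => hx1 hx2.
have e1 : (c + l) / c = 1 + x by rewrite /x; field; lra.
have e2 : (c - l) / c = 1 - x by rewrite /x; field; lra.
have e3 : c + l = c * (1 + x) by rewrite /x; field; lra.
have e4 : c - l = c * (1 - x) by rewrite /x; field; lra.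
rewrite /Ifun e1 e2 e3 e4.
set a := ln (1 + x); set b := ln (1 - x).
have Ha2 : Qp x - 4 * x ^+ 4 <= a by apply: ln_Q_lb.
have Ha1 : a <= Qp x by apply: ln_Q_ub; lra.
have Hb1 : b <= Qp (- x) by apply: ln_Q_ub; lra.
have Hb2 : Qp (- x) - 4 * (- x) ^+ 4 <= b by apply: ln_Q_lb; lra.
have x4 : (- x) ^+ 4 = x ^+ 4 by rewrite exprNn; ring.
rewrite x4 in Hb2.
have pa : 0 <= 1 + x by lra.
have pb : 0 <= 1 - x by lra.
have A1 : (1 + x) * a <= (1 + x) * Qp x by rewrite ler_wpM2l.
have A2 : (1 + x) * (Qp x - 4 * x ^+ 4) <= (1 + x) * a by rewrite ler_wpM2l.
have B1 : (1 - x) * b <= (1 - x) * Qp (- x) by rewrite ler_wpM2l.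
have B2 : (1 - x) * (Qp (- x) - 4 * x ^+ 4) <= (1 - x) * b by rewrite ler_wpM2l.
have E : (1 + x) * Qp x + (1 - x) * Qp (- x) = x ^+ 2 + 2 / 3 * x ^+ 4.
  by rewrite /Qp; field.
have E2 : (1 + x) * (Qp x - 4 * x ^+ 4) + (1 - x) * (Qp (- x) - 4 * x ^+ 4)
   = x ^+ 2 + 2 / 3 * x ^+ 4 - 8 * x ^+ 4.
  by rewrite /Qp; field.
have X4 : 0 <= x ^+ 4 by rewrite exprn_even_ge0.
have -> : (c * (1 + x) * a + c * (1 - x) * b) / 4 / 4 - l ^+ 2 / (16 * c)
   = c / 16 * ((1 + x) * a + (1 - x) * b - x ^+ 2).
  by rewrite /x; field; lra.
have -> : 2^-1 * (l ^+ 4 / c ^+ 3) = c / 16 * (8 * x ^+ 4).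
  by rewrite /x; field; lra.
have c16 : 0 <= c / 16 by rewrite divr_ge0 // ltW.
rewrite normrM (ger0_norm c16) (ler_wpM2l c16) //.
rewrite ler_norml; apply/andP; split; lra.
Qed.

Lemma part2 (c : R) : 0 < c ->
  exists K delta : R, 0 < K /\ 0 < delta /\
        forall lam : R, `|lam| < delta ->
          `|Jfun c lam - lam ^+ 2 / (16 * c)| <= K * (lam ^+ 4 / c ^+ 3).
Proof.
move=> c0; exists 4, (c / 2); split; first lra; split; first lra.
move=> l hl.
have /andP[h1 h2] := Jfun_bounds c l c0 hl.
have X : 0 <= l ^+ 4 / c ^+ 3 by apply: divr_ge0; [exact: exprn_even_ge0 | apply: exprn_ge0; exact: ltW].
rewrite ler_norml; apply/andP; split; lra.
Qed.

Lemma part3 (c : R) : 0 < c ->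
  exists K delta : R, 0 < K /\ 0 < delta /\
        forall lam : R, `|lam| < delta ->
          `|Jfun c lam - Ifun c lam / 4| <= K * (lam ^+ 4 / c ^+ 3).
Proof.
move=> c0; exists 5, (c / 2); split; first lra; split; first lra.
move=> l hl.
have /andP[h1 h2] := Jfun_bounds c l c0 hl.
have h3 := Ifun_bound c l c0 hl.
have X : 0 <= l ^+ 4 / c ^+ 3 by apply: divr_ge0; [exact: exprn_even_ge0 | apply: exprn_ge0; exact: ltW].
move: h3; rewrite !ler_norml => /andP[h3 h4]; apply/andP; split; lra.
Qed.
End P23.


Section Part1.
Variable R : realType.

Lemma itv01 (t : R) : `[0, 1]%classic t <-> 0 <= t <= 1.
Proof. by rewrite /= in_itv /=. Qed.

Lemma sup_close (f g : R -> R) (N eps B : R) : 0 < N ->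
  (forall t, 0 <= t <= 1 -> `|f t / N - g t| <= eps) ->
  (forall t, 0 <= t <= 1 -> g t <= B) ->
  `|sup [set f t | t in `[0, 1]] / N - sup [set g t | t in `[0, 1]]| <= eps.
Proof.
move=> N0 hfg hg.
set SF := [set f t | t in `[0, 1]]; set SG := [set g t | t in `[0, 1]].
have t0 : `[0, 1]%classic (0 : R) by apply/itv01; lra.
have nF : SF !=set0 by exists (f 0), 0.
have nG : SG !=set0 by exists (g 0), 0.
have ubG : ubound SG B by move=> y [t /itv01 ht <-]; exact: hg.
have fle t : 0 <= t <= 1 -> f t <= N * (g t + eps).
  move=> ht; have := hfg t ht; rewrite ler_norml => /andP[_ h].
  have : f t / N <= g t + eps by lra.
  by rewrite ler_pdivrMr // mulrC.
have gle t : 0 <= t <= 1 -> g t <= f t / N + eps.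
  by move=> ht; have := hfg t ht; rewrite ler_norml => /andP[h _]; lra.
have ubF : ubound SF (N * (B + eps)).
  move=> y [t /itv01 ht <-]; apply: (le_trans (fle t ht)).
  apply: ler_wpM2l; first exact: ltW.
  by have := hg t ht; lra.
have hsG : has_ubound SG by exists B.
have hsF : has_ubound SF by exists (N * (B + eps)).
have s1 : sup SF <= N * (sup SG + eps).
  apply: ge_sup => // y [t ht <-]; apply: (le_trans (fle t (proj1 (itv01 t) ht))).
  apply: ler_wpM2l; first exact: ltW.
  suff : g t <= sup SG by lra.
  by apply: ub_le_sup => //; exists t.
have s2 : sup SG <= sup SF / N + eps.
  apply: ge_sup => // y [t ht <-]; apply: (le_trans (gle t (proj1 (itv01 t) ht))).
  suff : f t / N <= sup SF / N by lra.
  rewrite ler_pM2r ?invr_gt0 //.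
  by apply: ub_le_sup => //; exists t.
have s1' : sup SF / N <= sup SG + eps by rewrite ler_pdivrMr // mulrC.
rewrite ler_norml; apply/andP; split; lra.
Qed.



Definition Kc (c : R) := 2 * c ^+ 2 + 2 * (2 * c + 2 * c ^+ 2) ^+ 2.

Lemma Cn_est (c lam : R) (m : nat) (t : R) :
  0 < c -> `|lam| < c -> 8 * c <= m%:R -> (1 <= m)%N -> 0 <= t <= 1 ->
  `|(- ln (chernoff_sum c lam (2 * m) t)) / (2 * m)%:R
     - (2 * c - c `^ (1 - t) * ((c + lam) `^ t + (c - lam) `^ t)) / 4|
  <= (Kc c + 2 * c) / m%:R.
Proof.
move=> c0 hl hm m1 ht.
have [hl1 hl2] : - c < lam /\ lam < c by move: hl; rewrite ltr_norml => /andP[].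
set M := m%:R.
have M1 : 1 <= M by rewrite /M ler1n.
have M0 : 0 < M by lra.
have NE : (2 * m)%:R = 2 * M :> R by rewrite natrM.
rewrite NE.
set N := 2 * M.
have N8 : 8 * c <= N by rewrite /N; lra.
have N1 : 1 <= N by rewrite /N; lra.
have N0 : 0 < N by lra.
have kin0 : 0 < c + lam by lra.
have kout0 : 0 < c - lam by lra.
have kin2 : c + lam <= 2 * c by lra.
have kout2 : c - lam <= 2 * c by lra.
have [hin0 /andP[din0 din1]] := @key_est R c (c + lam) N t c0 kin0 kin2 N8 N1 ht.
have [hout0 /andP[dout0 dout1]] := @key_est R c (c - lam) N t c0 kout0 kout2 N8 N1 ht.
have cN : 0 <= c / N <= 1.
  apply/andP; split; first by rewrite divr_ge0 // ltW.
  by rewrite ler_pdivrMr // mul1r; lra.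
have cinN : 0 <= (c + lam) / N <= 1.
  apply/andP; split; first by rewrite divr_ge0 // ltW.
  by rewrite ler_pdivrMr // mul1r; lra.
have coutN : 0 <= (c - lam) / N <= 1.
  apply/andP; split; first by rewrite divr_ge0 // ltW.
  by rewrite ler_pdivrMr // mul1r; lra.
have NE' : N = (2 * m)%:R by rewrite NE.
rewrite NE' chernoff_factor -?NE' //.
rewrite (@prod_split_same R (2 * m) _ (hfun (c / N) ((c + lam) / N) t) (hfun (c / N) ((c - lam) / N) t)); last first.
  by move=> e; rewrite /sbm_q -NE'; case: ifP.
rewrite card_in card_out.
set hin := hfun (c / N) ((c + lam) / N) t.
set hout := hfun (c / N) ((c - lam) / N) t.
rewrite lnM ?posrE ?exprn_gt0 // !lnXn // -(mulr_natl (ln hin)) -(mulr_natl (ln hout)).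
rewrite natrM natrB // -/M.
rewrite (_ : (m * m)%:R = M * M); last by rewrite natrM.
set Gi := c * (1 - t) + (c + lam) * t - c `^ (1 - t) * (c + lam) `^ t in din0 din1.
set Go := c * (1 - t) + (c - lam) * t - c `^ (1 - t) * (c - lam) `^ t in dout0 dout1.
set Di := - ln hin - Gi / N in din0 din1.
set Do := - ln hout - Go / N in dout0 dout1.
have ein : ln hin = - (Gi / N + Di) by rewrite /Di; ring.
have eout : ln hout = - (Go / N + Do) by rewrite /Do; ring.
have eg : (2 * c - c `^ (1 - t) * ((c + lam) `^ t + (c - lam) `^ t)) / 4 = (Gi + Go) / 4.
  by rewrite /Gi /Go; field.
rewrite eg ein eout.
case/andP: (ht) => t0 t1.
have Gib : 0 <= Gi <= 2 * c.
  have h1 := @amgm R c (c + lam) t c0 kin0 ht.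
  have h2 : 0 <= c `^ (1 - t) * (c + lam) `^ t by rewrite mulr_ge0 ?powR_ge0.
  have h3 : (c + lam) * t <= (2 * c) * t by apply: ler_wpM2r.
  have h4 : c * t <= c by rewrite ler_piMr // ltW.
  apply/andP; split; rewrite /Gi; lra.
have Gob : 0 <= Go <= 2 * c.
  have h1 := @amgm R c (c - lam) t c0 kout0 ht.
  have h2 : 0 <= c `^ (1 - t) * (c - lam) `^ t by rewrite mulr_ge0 ?powR_ge0.
  have h3 : (c - lam) * t <= (2 * c) * t by apply: ler_wpM2r.
  have h4 : c * t <= c by rewrite ler_piMr // ltW.
  apply/andP; split; rewrite /Go; lra.
have -> : - (M * (M - 1) * - (Gi / N + Di) + M * M * - (Go / N + Do)) / N - (Gi + Go) / 4
   = - (Gi / (4 * M)) + ((M - 1) * Di + M * Do) / 2.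
  by rewrite /N; field; lra.
have K0 : 0 <= Kc c.
  by rewrite /Kc; apply: addr_ge0; apply: mulr_ge0 => //; apply: sqr_ge0.
set X := (2 * c ^+ 2 + 2 * (2 * c + 2 * c ^+ 2) ^+ 2) / N ^+ 2 in din1 dout1.
have XE : M * X = Kc c / M / 4 by rewrite /X /Kc /N; field; lra.
have X0 : 0 <= X by rewrite /X divr_ge0 // -/(Kc c) ?exprn_ge0 // ltW.
have P1 : (M - 1) * Di <= (M - 1) * X by apply: ler_wpM2l; lra.
have P2 : M * Do <= M * X by apply: ler_wpM2l; lra.
have P3 : 0 <= (M - 1) * Di by apply: mulr_ge0; lra.
have P4 : 0 <= M * Do by apply: mulr_ge0; lra.
have P5 : (M - 1) * X = M * X - X by ring.
have G1 : Gi / (4 * M) <= c / M / 2.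
  rewrite (_ : c / M / 2 = (2 * c) / (4 * M)); last by field; lra.
  by apply: ler_wpM2r; [rewrite invr_ge0; lra | case/andP: Gib].
have G0 : 0 <= Gi / (4 * M) by apply: divr_ge0; [case/andP: Gib | lra].
have A0 : 0 <= Kc c / M by apply: divr_ge0; lra.
have C0 : 0 <= c / M by apply: divr_ge0; lra.
have E : (Kc c + 2 * c) / M = Kc c / M + 2 * (c / M) by field; lra.
rewrite E ler_norml; apply/andP; split; lra.
Qed.



Lemma part1 (c lam : R) : 0 < c -> `|lam| < c ->
  (fun m : nat => chernoff_info c lam (2 * m)%N / (2 * m)%:R) @ \oo --> Jfun c lam.
Proof.
move=> c0 hl.
apply/cvgrPdist_le => eps e0.
set K := Kc c + 2 * c.
have K0 : 0 <= K.
  rewrite /K /Kc; apply: addr_ge0; last by apply: mulr_ge0 => //; apply: ltW.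
  by apply: addr_ge0; apply: mulr_ge0 => //; apply: sqr_ge0.
set M0 := (Num.truncn (K / eps + 8 * c)).+1.
exists M0 => // m /= hm.
have h1 := Num.Theory.truncnS_gt (K / eps + 8 * c).
have hm' : (M0%:R : R) <= m%:R by rewrite ler_nat.
have Ke : 0 <= K / eps by apply: divr_ge0 => //; apply: ltW.
have mR : K / eps + 8 * c < m%:R by rewrite /M0 in hm'; lra.
have m0 : (0 : R) < m%:R by lra.
have m1 : (1 <= m)%N by rewrite -(ltr_nat R); lra.
have hm8 : 8 * c <= m%:R by lra.
have Km : K / m%:R <= eps.
  rewrite ler_pdivrMr //.
  have : K / eps * eps = K by rewrite divfK // gt_eqF.
  have : K / eps * eps <= m%:R * eps by rewrite ler_pM2r //; lra.
  lra.
rewrite distrC /chernoff_info /Jfun.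
apply: le_trans Km.
apply: (@sup_close (fun t => - ln (chernoff_sum c lam (2 * m) t))
   (fun t => (2 * c - c `^ (1 - t) * ((c + lam) `^ t + (c - lam) `^ t)) / 4)
   (2 * m)%:R (K / m%:R) (c / 2)).
- by rewrite ltr0n muln_gt0 /= (leq_trans _ m1).
- by move=> t ht; exact: Cn_est.
- move=> t ht.
  have : 0 <= c `^ (1 - t) * ((c + lam) `^ t + (c - lam) `^ t).
    by rewrite mulr_ge0 ?addr_ge0 ?powR_ge0.
  lra.
Qed.

End Part1.


Theorem lemma4p2 (R : realType) (c : R) (hc : 0 < c) :
  (forall lam : R, `|lam| < c ->
     (fun m : nat => chernoff_info c lam (2 * m)%N / (2 * m)%:R)
       @ \oo --> Jfun c lam)
  /\ (exists K delta : R, 0 < K /\ 0 < delta /\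
        forall lam : R, `|lam| < delta ->
          `|Jfun c lam - lam ^+ 2 / (16 * c)| <= K * (lam ^+ 4 / c ^+ 3))
  /\ (exists K delta : R, 0 < K /\ 0 < delta /\
        forall lam : R, `|lam| < delta ->
          `|Jfun c lam - Ifun c lam / 4| <= K * (lam ^+ 4 / c ^+ 3)).
Proof.
split; first by move=> lam hl; exact: part1.
split; [exact: part2 | exact: part3].
Qed.
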